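(* Let $L=E[C_1,\dots,C_n]$ be a congruence uniform lattice that is extremal. Then every element of the spine of $L$ is left modular.
   Context: All lattices are finite. For a convex subset $C$ of a lattice $L$ (convex: $x,y\in C\Rightarrow[x,y]\subseteq C$), let $I_L(C)=\{y\in L\mid\exists x\in C,\ y\le x\}$, and let the doubling $L[C]$ be the subposet of $L\times\{0<1\}$ on $\big(I_L(C)\times\{0\}\big)\sqcup\big(((L\setminus I_L(C))\cup C)\times\{1\}\big)$. $E[\,]$ is the one-element lattice and $E[C_1,\dots,C_{i+1}]:=E[C_1,\dots,C_i][C_{i+1}]$ with $C_{i+1}$ a nonempty convex subset of $E[C_1,\dots,C_i]$; if every $C_i$ is an interval, the lattice is congruence uniform. The length of a poset is the maximum number of elements of a chain minus one; the spine is the set of elements lying on some chain of maximum length. $L$ is extremal if its length equals both the number of join-irreducible elements (covering exactly one element) and the number of meet-irreducible elements (covered by exactly one element). An element $a$ is left modular if for all $b<c$, $(b\vee a)\wedge c=b\vee(a\wedge c)$. *)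

(* Defs.v *)
From mathcomp Require Import all_boot.
Set Implicit Arguments. Unset Strict Implicit. Unset Printing Implicit Defensive.

Section FinPoset.
Variables (T : finType) (le : rel T).

Definition plt (x y : T) : bool := le x y && (x != y).

Definition covers (x y : T) : bool :=
  plt y x && [forall z, ~~ (plt y z && plt z x)].

Definition join_irr (x : T) : bool := #|[set y | covers x y]| == 1.
Definition meet_irr (x : T) : bool := #|[set y | covers y x]| == 1.

Definition is_chain (S : {set T}) : bool :=
  [forall x in S, forall y in S, le x y || le y x].

Definition poset_length : nat := (\max_(S : {set T} | is_chain S) #|S|).-1.

Definition spine : {set T} :=
  [set x | [exists S : {set T}, [&& is_chain S, #|S|.-1 == poset_length & x \in S]]].

Definition extremal : Prop :=
  poset_length = #|[set x | join_irr x]| /\ poset_length = #|[set x | meet_irr x]|.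

Definition is_join (x y z : T) : Prop :=
  le x z /\ le y z /\ forall w, le x w -> le y w -> le z w.
Definition is_meet (x y z : T) : Prop :=
  le z x /\ le z y /\ forall w, le w x -> le w y -> le w z.

Definition left_modular (a : T) : Prop :=
  forall b c, plt b c ->
  forall j u m v, is_join b a j -> is_meet j c u ->
                  is_meet a c m -> is_join b m v -> u = v.

Definition interval (a b : T) : {set T} := [set x | le a x && le x b].

Definition down_set (C : {set T}) : {set T} :=
  [set y | [exists x in C, le y x]].

(* carrier of the doubling L[C], as a subset of L x {0<1} (false < true) *)
Definition doubling_set (C : {set T}) : {set T * bool} :=
  [set p | if p.2 then (p.1 \notin down_set C) || (p.1 \in C)
           else p.1 \in down_set C].

Definition prod_le (p q : T * bool) : bool := le p.1 q.1 && (p.2 ==> q.2).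

End FinPoset.

(* Lattices E[C_1,...,C_n] with every C_i a (nonempty) interval, up to
   isomorphism: the one-element lattice, and the doubling of such a lattice
   at an interval [a,b] with a <= b. A poset (T',le') is (isomorphic to)
   L[C] when an injective f : T' -> T * bool has image exactly the doubling
   set and reflects/preserves the order. *)
Inductive interval_doubling : forall T : finType, rel T -> Prop :=
| id_one (T : finType) (le : rel T) :
    #|T| = 1 -> (forall x, le x x) -> interval_doubling le
| id_double (T : finType) (le : rel T) (a b : T)
            (T' : finType) (le' : rel T') (f : T' -> T * bool) :
    interval_doubling le -> le a b ->
    injective f ->
    (forall p, p \in doubling_set le (interval le a b) <-> exists x, f x = p) ->
    (forall x y, le' x y = prod_le le (f x) (f y)) ->
    interval_doubling le'.

(* Main.v *)
Require Import Defs.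
From mathcomp Require Import all_boot.
From mathcomp Require Import zify.

Set Implicit Arguments. Unset Strict Implicit. Unset Printing Implicit Defensive.

Definition Mx (T : finType) (le : rel T) : nat :=
  \max_(S : {set T} | is_chain le S) #|S|.

Definition porder (T : finType) (le : rel T) : Prop :=
  [/\ reflexive le, transitive le & antisymmetric le].

Definition dmem (T : finType) (le : rel T) (a b : T) (p : T * bool) : bool :=
  if p.2 then ~~ le p.1 b || le a p.1 else le p.1 b.

Lemma dsE (T : finType) (le : rel T) a b : reflexive le -> transitive le -> le a b ->
  forall y, (y \in down_set le (interval le a b)) = le y b.
Proof.
move=> rf tr hab y; rewrite inE; apply/existsP/idP => [[x /andP[]]|hyb].
  by rewrite inE => /andP[_ hxb] hyx; exact: tr hyx hxb.
by exists b; rewrite !inE hab rf /=.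
Qed.

Lemma dsetE (T : finType) (le : rel T) a b : reflexive le -> transitive le -> le a b ->
  forall p, (p \in doubling_set le (interval le a b)) = dmem le a b p.
Proof.
move=> rf tr hab [x k]; rewrite /doubling_set inE /dmem /=.
case: k; rewrite dsE // inE; by case: (le x b); rewrite ?andbT ?andbF ?orbF.
Qed.

Lemma join_irrP (T : finType) (le : rel T) : porder le -> forall x,
  join_irr le x <-> exists y, plt le y x /\ forall z, plt le z x -> le z y.
Proof.
move=> [rf tr an] x; split.
  move=> /cards1P [y hA].
  have hy : covers le x y.
    have : y \in [set y0 | covers le x y0] by rewrite hA set11.
    by rewrite inE.
  exists y; split; first by case/andP: hy.
  move=> z hz.
  pose P := fun w => le z w && plt le w x.
  have Pz : P z by rewrite /P rf hz.
  case: (@arg_maxnP T z P (fun w => #|[set v | le v w]|) Pz) => w /andP[hzw hwx] wmax.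
  have hcov : covers le x w.
    rewrite /covers hwx /=; apply/forallP => v; apply/negP => /andP[hwv hvx].
    have Pv : P v by rewrite /P hvx andbT; exact: tr hzw (proj1 (andP hwv)).
    have := wmax v Pv; apply/negP; rewrite -ltnNge; apply: proper_card.
    apply/properP; split.
      by apply/subsetP => t; rewrite !inE => htw; exact: tr htw (proj1 (andP hwv)).
    exists v; first by rewrite inE rf.
    rewrite inE; apply/negP => hvw; case/andP: hwv => hwv hne.
    by move: hne; rewrite (an w v) ?hwv ?hvw ?eqxx.
  have : w \in [set y0 | covers le x y0] by rewrite inE.
  by rewrite hA inE => /eqP <-.
move=> [y [hyx hmax]]; apply/cards1P; exists y; apply/setP => y0; rewrite !inE.
apply/idP/eqP.
  move=> /andP[hy0 /forallP hno]; have hle := hmax _ hy0.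
  case: (eqVneq y0 y) => // hne.
  by have := hno y; rewrite hyx andbT /plt hle hne.
move=> ->; rewrite /covers hyx /=; apply/forallP => z; apply/negP => /andP[hyz hzx].
have hzy := hmax _ hzx; case/andP: hyz => hyz hne.
by move: hne; rewrite (an y z) ?hyz ?hzy ?eqxx.
Qed.

Definition dstep (T T' : finType) (le : rel T) (a b : T) (le' : rel T')
  (f : T' -> T * bool) : Prop :=
  porder le /\ le a b /\ injective f /\
      (forall p, dmem le a b p -> exists x, f x = p) /\ (forall x, dmem le a b (f x)) /\
      (forall x y, le' x y = prod_le le (f x) (f y)).

Lemma step_porder (T T' : finType) (le : rel T) a b (le' : rel T') f :
  dstep le a b le' f -> porder le'.
Proof.
move=> [[rf tr an] [hab [finj [himg [hmem hle]]]]]; split.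
- by move=> x; rewrite hle /prod_le rf implybb.
- move=> y x z; rewrite !hle /prod_le => /andP[h1 h2] /andP[h3 h4].
  rewrite (tr _ _ _ h1 h3) /=; move: h2 h4; do 2 case: (f _).2 => //.
- move=> x y; rewrite !hle /prod_le => /andP[/andP[h1 h2] /andP[h3 h4]].
  apply: finj; case: (f x) h1 h2 h3 h4 => x1 x2; case: (f y) => y1 y2 /= h1 h2 h3 h4.
  by rewrite (an x1 y1) ?h1 ?h3 //; move: h2 h4; case: x2; case: y2.
Qed.

Definition Sk (T T' : finType) (f : T' -> T * bool) (S' : {set T'}) (k : bool) : {set T} :=
  [set x | (x, k) \in f @: S'].

Lemma Sk_mem (T T' : finType) (f : T' -> T * bool) (S' : {set T'}) k x :
  (x \in Sk f S' k) <-> exists2 s, s \in S' & f s = (x, k).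
Proof.
rewrite inE; split; first by case/imsetP => s hs e; exists s; rewrite ?e.
by case=> s hs e; apply/imsetP; exists s; rewrite ?e.
Qed.

Lemma step_chain (T T' : finType) (le : rel T) a b (le' : rel T') f (S' : {set T'}) :
  dstep le a b le' f -> is_chain le' S' ->
  [/\ #|S'| = #|Sk f S' false :|: Sk f S' true| + #|Sk f S' false :&: Sk f S' true|,
      is_chain le (Sk f S' false :|: Sk f S' true),
      #|Sk f S' false :&: Sk f S' true| <= 1 &
      forall c, c \in Sk f S' false :&: Sk f S' true ->
        le a c /\ forall x, x \in Sk f S' true -> le c x].
Proof.
move=> hd; have [[rf tr an] [hab [finj [himg [hmem hle]]]]] := hd.
move=> /forallP hch.
have cmp : forall s t, s \in S' -> t \in S' -> le' s t || le' t s.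
  by move=> s t hs ht; move: (hch s); rewrite hs /= => /forallP /(_ t); rewrite ht.
have hcard : forall k, #|Sk f S' k| = #|f @: S' :&: [set p | p.2 == k]|.
  move=> k; rewrite -(card_imset _ (fun x y (e : (x, k) = (y, k)) => f_equal fst e)).
  apply: eq_card => -[x k']; rewrite !inE; apply/imsetP/andP.
    by case=> y; rewrite inE => hy [-> ->].
  by case=> hx /= /eqP e; subst k; exists x => //; rewrite inE. 
have hsplit : #|S'| = #|Sk f S' false| + #|Sk f S' true|.
  rewrite -(card_imset S' finj) -(cardsID [set p : T * bool | p.2] (f @: S')) !hcard.
  rewrite addnC; congr (_ + _); apply: eq_card => -[x k]; rewrite !inE /=; by case: k; rewrite ?andbT ?andbF.
have hI : forall c d, c \in Sk f S' false -> d \in Sk f S' true -> le c d.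
  move=> c d /Sk_mem [s hs hfs] /Sk_mem [t ht hft].
  have := cmp s t hs ht; rewrite !hle hfs hft /prod_le /= andbT andbF orbF; done.
split.
- by rewrite hsplit cardsUI.
- apply/forallP => x; apply/implyP => hx; apply/forallP => y; apply/implyP => hy.
  have getk : forall z, z \in Sk f S' false :|: Sk f S' true -> exists k, exists2 s, s \in S' & f s = (z, k).
    move=> z; rewrite inE => /orP[] /Sk_mem h; [exists false | exists true]; exact: h.
  have [kx [s hs hfs]] := getk x hx; have [ky [t ht hft]] := getk y hy.
  have := cmp s t hs ht; rewrite !hle hfs hft /prod_le /=.
  by case/orP => /andP[-> _]; rewrite ?orbT.
- case: (set_0Vmem (Sk f S' false :&: Sk f S' true)) => [->|[c hc]]; first by rewrite cards0.
  rewrite -(cards1 c); apply: subset_leq_card; apply/subsetP => d hd'.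
  case/setIP: hc => hc0 hc1; case/setIP: hd' => hd0 hd1.
  by rewrite inE (an d c) // (hI _ _ hd0 hc1) (hI _ _ hc0 hd1).
- move=> c /setIP [hc0 hc1]; split; last by move=> x hx; exact: hI.
  case/Sk_mem: hc0 => s _ hs; case/Sk_mem: hc1 => t _ ht.
  have := hmem s; have := hmem t; rewrite hs ht /dmem /= => /orP[] // hn hb.
  by rewrite hb in hn.
Qed.

Lemma chain_Mx (T : finType) (le : rel T) (S : {set T}) : is_chain le S -> #|S| <= Mx le.
Proof. by move=> h; apply: (@leq_bigmax_cond _ (fun S => is_chain le S) (fun S => #|S|)). Qed.

Lemma step_Mx (T T' : finType) (le : rel T) a b (le' : rel T') f :
  dstep le a b le' f -> Mx le' <= (Mx le).+1.
Proof.
move=> hd; apply/bigmax_leqP => S' hS'.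
have [-> hc h1 _] := step_chain hd hS'.
by have := chain_Mx hc; lia.
Qed.

Lemma step_spine (T T' : finType) (le : rel T) a b (le' : rel T') f p :
  dstep le a b le' f -> Mx le' = (Mx le).+1 -> p \in spine le' ->
  (f p).1 \in spine le /\ ((f p).2 -> le a (f p).1).
Proof.
move=> hd hM; have [[rf tr an] _] := hd.
rewrite inE => /existsP [S' /and3P [hS' hlen hp]].
have hS'M := chain_Mx hS'.
have hpos : 0 < #|S'| by apply/card_gt0P; exists p.
move: hlen; rewrite /poset_length -/(Mx le') hM /= => /eqP hlen.
have [hcard hc h1 hC] := step_chain hd hS'.
have hU := chain_Mx hc.
have hI : #|Sk f S' false :&: Sk f S' true| = 1 by lia.
have hUM : #|Sk f S' false :|: Sk f S' true| = Mx le by lia.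
have hfp : (f p).1 \in Sk f S' false :|: Sk f S' true.
  rewrite inE; apply/orP; case e: (f p).2; [right | left];
  by apply/Sk_mem; exists p => //; rewrite -e -surjective_pairing.
split.
  rewrite inE; apply/existsP; exists (Sk f S' false :|: Sk f S' true).
  by rewrite hc hfp hUM /poset_length eqxx.
move=> e; have /card_gt0P [c hcI] : 0 < #|Sk f S' false :&: Sk f S' true| by rewrite hI.
have [hac hcx] := hC c hcI.
apply: tr hac (hcx _ _); apply/Sk_mem; exists p => //; by rewrite -e -surjective_pairing.
Qed.

Lemma step_J (T T' : finType) (le : rel T) a b (le' : rel T') f :
  dstep le a b le' f ->
  #|[set x | join_irr le x]| < #|[set x | join_irr le' x]|.
Proof.
move=> hd; have [po [hab [finj [himg [hmem hle]]]]] := hd.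
have po' := step_porder hd; have [rf tr an] := po.
pose A := [set (j, ~~ le j b) | j in [set x | join_irr le x]].
have hA : #|A| = #|[set x | join_irr le x]|.
  by apply: card_imset => x y [].
have haA : (a, true) \notin A.
  by apply/imsetP => -[j _ [ea e]]; move: e; rewrite -ea hab.
rewrite -hA; apply: (@leq_trans #|(a, true) |: A|); first by rewrite cardsU1 haA.
rewrite -(card_imset _ finj); apply: subset_leq_card; apply/subsetP => p.
move=> hpU; suff [t ht <-] : exists2 t, join_irr le' t & f t = p.
  by apply: imset_f; rewrite inE.
move: hpU; case/setU1P => [->|/imsetP [j]].
  have [t ht] : exists x, f x = (a, true) by apply: himg; rewrite /dmem /= rf orbT.
  have [t' ht'] := himg (a, false) hab.
  exists t => //; apply/(join_irrP po'); exists t'; split.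
    rewrite /plt hle ht ht' /prod_le /= rf /=; apply/eqP => e.
    by move: ht'; rewrite e ht.
  move=> z /andP [hzt hne]; move: hzt; rewrite !hle ht ht' /prod_le /=.
  case e: (f z) => [zz kz] /= /andP [hza hk]; rewrite hza /=.
  apply/negP => hkz; move: (hmem z); rewrite e /dmem /= hkz.
  rewrite (tr _ _ _ hza hab) /= => haz.
  have ez : zz = a by apply: an; rewrite hza haz.
  by move: hne; rewrite (finj z t) ?eqxx // e ht ez hkz.
rewrite inE => /(join_irrP po) [j' [hj'j hmax]] ->.
case hjb: (le j b) => /=.
  have [t ht] := himg (j, false) hjb.
  have hj'b : le j' b by apply: tr hjb; case/andP: hj'j.
  have [t' ht'] := himg (j', false) hj'b.
  exists t => //; apply/(join_irrP po'); exists t'; split.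
    rewrite /plt hle ht ht' /prod_le /=; case/andP: hj'j => -> hne /=.
    apply/eqP => e; move: ht'; rewrite e ht => -[ee]; by rewrite ee eqxx in hne.
  move=> z /andP [hzt hne]; move: hzt; rewrite !hle ht ht' /prod_le /=.
  case e: (f z) => [zz kz] /= /andP [hzj hk]; rewrite implybF in hk.
  rewrite (negbTE hk) andbT; apply: hmax; rewrite /plt hzj /=.
  apply/eqP => ez; move: hne; rewrite (finj z t) ?eqxx // e ht ez.
  by rewrite (negbTE hk).
have [t ht] : exists x, f x = (j, true) by apply: himg; rewrite /dmem /= hjb.
pose k' := ~~ le j' b || le a j'.
have hk' : dmem le a b (j', k') by rewrite /dmem /=; case ek: k' => //; move: ek; rewrite /k'; case: (le j' b).
have [t' ht'] := himg (j', k') hk'.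
exists t => //; apply/(join_irrP po'); exists t'; split.
  rewrite /plt hle ht ht' /prod_le /= implybT andbT; case/andP: hj'j => -> hne /=.
  apply/eqP => e; move: ht'; rewrite e ht => -[ee]; by rewrite ee eqxx in hne.
move=> z /andP [hzt hne]; move: hzt; rewrite !hle ht ht' /prod_le /=.
case e: (f z) => [zz kz] /= /andP [hzj _].
have hzne : zz != j.
  apply/eqP => ez; case: kz e => e.
    by move: hne; rewrite (finj z t) ?eqxx // e ht ez.
  by move: (hmem z); rewrite e /dmem /= ez hjb.
have hzj' : le zz j' by apply: hmax; rewrite /plt hzj hzne.
rewrite hzj' /=; apply/implyP => hkz; rewrite /k'.
case hj'b: (le j' b) => //=.
move: (hmem z); rewrite e /dmem /= hkz (tr _ _ _ hzj' hj'b) /= => haz.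
exact: tr haz hzj'.
Qed.

Lemma step_join (T T' : finType) (le : rel T) a b (le' : rel T') f s t J :
  dstep le a b le' f -> is_join le' s t J -> is_join le (f s).1 (f t).1 (f J).1.
Proof.
move=> [[rf tr an] [hab [finj [himg [hmem hle]]]]] [hsJ [htJ hJ]].
move: hsJ htJ; rewrite !hle => /andP [h1 _] /andP [h2 _]; split => //; split => //.
move=> w hsw htw.
pose kw := [|| (f s).2, (f t).2 | ~~ le w b].
have [tw htw'] : exists x, f x = (w, kw).
  apply: himg; rewrite /dmem /=; case ek: kw => //=.
    case hwb: (le w b) => //=.
    move: ek; rewrite /kw hwb orbF => /orP [] hk.
      by move: (hmem s); rewrite /dmem hk (tr _ _ _ hsw hwb) /= => h; exact: tr h hsw.
    by move: (hmem t); rewrite /dmem hk (tr _ _ _ htw hwb) /= => h; exact: tr h htw.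
  by move: ek; rewrite /kw; case: (le w b); rewrite ?orbT.
have := hJ tw; rewrite !hle htw' /prod_le /= hsw htw /kw.
case: (f s).2; case: (f t).2 => //= /(_ isT isT) /andP [] //.
Qed.

Lemma step_meet (T T' : finType) (le : rel T) a b (le' : rel T') f s t M :
  dstep le a b le' f -> is_meet le' s t M -> is_meet le (f s).1 (f t).1 (f M).1.
Proof.
move=> [[rf tr an] [hab [finj [himg [hmem hle]]]]] [hsM [htM hM]].
move: hsM htM; rewrite !hle => /andP [h1 _] /andP [h2 _]; split => //; split => //.
move=> w hws hwt.
pose kw := [&& (f s).2, (f t).2 & (~~ le w b || le a w)].
have [tw htw'] : exists x, f x = (w, kw).
  apply: himg; rewrite /dmem /=; case ek: kw => //=.
    by move: ek; rewrite /kw => /and3P [].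
  move: ek; rewrite /kw; case es: (f s).2 => /=.
    case et: (f t).2 => /=.
      by case: (le w b).
    by move: (hmem t); rewrite /dmem et => h _; exact: tr hwt h.
  by move: (hmem s); rewrite /dmem es => h _; exact: tr hws h.
have := hM tw; rewrite !hle htw' /prod_le /= hws hwt /kw.
case: (f s).2; case: (f t).2 => //=; rewrite ?implybT => /(_ isT isT) /andP [] //.
Qed.

Lemma step_lm (T T' : finType) (le : rel T) a b (le' : rel T') f p :
  dstep le a b le' f -> (forall x, x \in spine le -> left_modular le x) ->
  (f p).1 \in spine le -> ((f p).2 -> le a (f p).1) -> left_modular le' p.
Proof.
move=> hd IH hsp ha; have [[rf tr an] [hab [finj [himg [hmem hle]]]]] := hd.
have [rf' tr' an'] := step_porder hd.
move=> q r hqr J u m v hJ hu hm hv.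
have pJ := step_join hd hJ; have pu := step_meet hd hu.
have pm := step_meet hd hm; have pv := step_join hd hv.
case: hJ => [hqJ [hpJ hJl]]; case: hu => [huJ [hur hul]].
case: hm => [hmp [hmr hml]]; case: hv => [hqv [hmv hvl]].
have hqr' : le' q r by case/andP: hqr.
have hqu : le' q u by apply: hul.
have hvu : le' v u.
  apply: hvl => //; apply: hul => //; exact: tr' hmp hpJ.
have epi : (f u).1 = (f v).1.
  case: (eqVneq (f q).1 (f r).1) => eqr.
    move: hqu hur hqv hvu; rewrite !hle /prod_le => /andP[h1 _] /andP[h2 _] /andP[h3 _] /andP[h4 _].
    rewrite eqr in h1 h3.
    have e1 : (f u).1 = (f r).1 by apply: an; rewrite h2 h1.
    by apply: an; rewrite e1 h3 /= -e1.
  apply: (IH _ hsp (f q).1 (f r).1 _ (f J).1 (f u).1 (f m).1 (f v).1) => //.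
  by rewrite /plt eqr andbT; move: hqr'; rewrite hle => /andP[].
case: (eqVneq (f u).2 (f v).2) => [ekk | nkk].
  by apply: finj; move: epi ekk; case: (f u) => ? ?; case: (f v) => ? ? /= -> ->.
have [ku kv] : (f u).2 = true /\ (f v).2 = false.
  move: hvu nkk; rewrite hle /prod_le => /andP [_].
  by case: (f u).2; case: (f v).2.
have hvb : le (f v).1 b by move: (hmem v); rewrite /dmem kv.
have hav : le a (f v).1 by move: (hmem u); rewrite /dmem ku epi hvb.
have kq : (f q).2 = false.
  by move: hqv; rewrite hle /prod_le kv implybF => /andP [_ /negbTE].
have kr : (f r).2 = true.
  by move: hur; rewrite hle /prod_le ku => /andP [_].
have hvr : le (f v).1 (f r).1 by move: hur; rewrite hle /prod_le -epi => /andP[].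
case ip: (f p).2.
  have hax := ha ip.
  have har : le a (f r).1 by exact: tr hav hvr.
  have ham : le a (f m).1 by case: pm => _ [_]; apply.
  have hmw : le (f m).1 (f v).1 by move: hmv; rewrite hle => /andP[].
  have hmb : le (f m).1 b by exact: tr hmw hvb.
  have [tm etm] : exists x, f x = ((f m).1, true).
    by apply: himg; rewrite /dmem /= ham orbT.
  have := hml tm; rewrite !hle etm /prod_le /= ip kr.
  case: pm => h1 [h2 _]; rewrite h1 h2 => /(_ isT isT) /andP [_ /= hkm].
  by move: hmv; rewrite hle /prod_le hkm kv andbF.
have hqb : le (f q).1 b by move: (hmem q); rewrite /dmem kq.
have hpb : le (f p).1 b by move: (hmem p); rewrite /dmem ip.
have hJb : le (f J).1 b by case: pJ => _ [_]; apply.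
have [tJ etJ] : exists x, f x = ((f J).1, false) by apply: himg.
have := hJl tJ; rewrite !hle etJ /prod_le /= kq ip.
case: pJ => h1 [h2 _]; rewrite h1 h2 => /(_ isT isT) /andP [_ hkJ].
rewrite implybF in hkJ.
by move: huJ; rewrite hle /prod_le ku /= (negbTE hkJ) andbF.
Qed.

Lemma main_ind (T : finType) (le : rel T) : interval_doubling le ->
  porder le /\ exists n, [/\ Mx le <= n.+1, n <= #|[set x | join_irr le x]| &
    (Mx le = n.+1 -> forall x, x \in spine le -> left_modular le x)].
Proof.
elim => {T le} [T le h1 hr | T le a b T' le' f Hd [po [n [hM hJ hS]]] hab finj himg hle].
  have [x0 hx0] := fintype1 h1.
  split.
    split => //.
      by move=> y x z _ _; rewrite (hx0 x) (hx0 z).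
    by move=> x y _; rewrite (hx0 x) (hx0 y).
  exists 0; split => //.
    by apply/bigmax_leqP => S _; rewrite -h1; exact: max_card.
  by move=> _ x _ b c /andP [_ hne]; rewrite (hx0 b) (hx0 c) eqxx in hne.
have [rf tr an] := po.
have hd : dstep le a b le' f.
  split => //; split => //; split => //; split.
    by move=> p hp; apply/himg; rewrite dsetE.
  by split => // x; rewrite -dsetE //; apply/himg; exists x.
split; first exact: step_porder hd.
have hM' := step_Mx hd; have hJ' := step_J hd.
exists n.+1; split; [lia | lia | ].
move=> hMe x hx.
have hMn : Mx le = n.+1 by lia.
have hMe' : Mx le' = (Mx le).+1 by lia.
have [h1 h2] := step_spine hd hMe' hx.
exact: step_lm hd (hS hMn) h1 h2.
Qed.

Theorem lemma3p20 (T : finType) (le : rel T) :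
  interval_doubling le -> extremal le ->
  forall x, x \in spine le -> left_modular le x.
Proof.
move=> hid [hJ _] x hx.
have [_ [n [hM hn hS]]] := main_ind hid.
apply: hS => //.
have hpos : 0 < Mx le.
  move: hx; rewrite inE => /existsP [S /and3P [hS' _ hxS]].
  have := chain_Mx hS'; have : 0 < #|S| by apply/card_gt0P; exists x.
  lia.
move: hJ; rewrite /poset_length -/(Mx le); lia.
Qed.
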